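(* Let $n_1 \ge 3$ be an odd integer, $p$ a prime with $p \equiv 1 \pmod{n_1}$, $\omega = e^{2\pi\imath/p}$, $r$ a primitive root modulo $p$, and $\sigma$ the automorphism of $\mathbb{Q}(\omega)$ with $\sigma(\omega) = \omega^{r}$. Let $m = (p-1)/2$, $\alpha = \prod_{k=0}^{m-1}(1-\omega^{r^k})$, let $\lambda$ be an integer with $\lambda(r-1)\equiv 1 \pmod p$, $z = \omega^{\lambda}\alpha(1-\omega)$, and $x = \sum_{k=1}^{(p-1)/n_1}\sigma^{k n_1}(z)$. Then the $n_1\times n_1$ matrix $G_{n_1} = \frac{1}{p}\big[\sigma^{(i+j) \bmod n_1}(x)\big]_{i,j=0}^{n_1-1}$ (a circulant-type matrix whose rows are successive cyclic left shifts of $\frac1p(x,\sigma(x),\dots,\sigma^{n_1-1}(x))$) is unitary, i.e. $G_{n_1}G_{n_1}^{\dagger} = I_{n_1}$; equivalently, the lattice it generates is orthogonal.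
   Context: $x$ lies in the subfield $\mathbb{K}'$ of $\mathbb{Q}(\omega)$ fixed by $\sigma^{n_1}$, which has degree $n_1$ over $\mathbb{Q}$; $\sigma$ restricted to $\mathbb{K}'$ has order $n_1$, so $\sigma^{(i+j)\bmod n_1}(x) = \sigma^{i+j}(x)$. *)

(* Defs.v *)
From HB Require Import structures.
From mathcomp Require Import all_boot all_order all_algebra all_field.
Set Implicit Arguments. Unset Strict Implicit. Unset Printing Implicit Defensive.
Import Order.TTheory GRing.Theory Num.Theory.

Definition primitive_root_mod (p r : nat) : bool :=
  (r ^ p.-1 == 1 %[mod p]) &&
  [forall k : 'I_p.-1, (0 < k)%N ==> (r ^ k != 1 %[mod p])].

Local Open Scope ring_scope.

(* omega = e^{2 pi i / p} in the algebraic complex numbers: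
   p.-root (-1) is the root of -1 with minimal nonnegative argument, i.e. e^{i pi/p}. *)
Definition omega_p (p : nat) : algC := (p.-root (-1)) ^+ 2.

(* Main.v *)
Require Import Defs.
From HB Require Import structures.
From mathcomp Require Import all_boot all_order all_algebra all_field.
From mathcomp Require Import ring zify.
Import Order.TTheory GRing.Theory Num.Theory.
Local Open Scope ring_scope.


Lemma one_neq_m1 : (1 : algC) != -1.
Proof.
apply/eqP=> h; have : (2%:R : algC) != 0 by rewrite pnatr_eq0.
by rewrite mulrS mulr1n {1}h addNr eqxx.
Qed.

Lemma omega_prim (p : nat) : prime p -> (2 < p)%N ->
  p.-primitive_root ((p.-root (-1)) ^+ 2 : algC).
Proof.
move=> hp hp2; have p0 : (0 < p)%N by apply: prime_gt0.
have podd : odd p.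
  by case: (even_prime hp) => // h2; move: hp2; rewrite h2.
set rho : algC := p.-root (-1).
have rhop : rho ^+ p = -1 by rewrite /rho rootCK.
have wp : (rho ^+ 2) ^+ p = 1 by rewrite exprAC rhop expr2 mulN1r opprK.
have [m mprim mdvd] := prim_order_exists p0 wp.
case/primeP: hp => _ /(_ m mdvd) /orP [/eqP m1 | /eqP mp]; last by rewrite -mp.
exfalso; move: mprim; rewrite m1 => /prim_expr_order; rewrite expr1 => /eqP.
rewrite sqrf_eq1 => /orP [/eqP r1 | /eqP rm1].
  by move: rhop; rewrite r1 expr1n => /eqP; rewrite (negbTE one_neq_m1).
have [w0 w0prim] := C_prim_root_exists p0.
have w0p : w0 ^+ p = 1 by apply: prim_expr_order.
have w0n1 : w0 != 1.
  apply/eqP => h; have := prim_order_dvd w0prim 1; rewrite expr1 h eqxx.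
  by move/dvdn_leq => /(_ isT); lia.
pose y := if 0 <= 'Im (- w0) then - w0 else - w0^*.
have yp : y ^+ p = -1.
  rewrite /y; case: ifP => _; rewrite exprNn -signr_odd podd expr1 ?mulN1r.
    by rewrite w0p.
  by rewrite -rmorphXn w0p rmorph1.
have yIm : 0 <= 'Im y.
  rewrite /y; case: ifP => // h.
  have hr : 'Im (- w0) \is Num.real by apply: Creal_Im.
  move: h; rewrite real_leNgt ?rpred0 // => /negbFE.
  by move=> h1; move: h1; rewrite !raddfN /= Im_conj opprK oppr_lt0 => /ltW.
have yRe : 'Re y = - 'Re w0 by rewrite /y; case: ifP => _; rewrite raddfN /= ?Re_conj.
have := rootC_Re_max p0 yp yIm; rewrite -/rho rm1 yRe raddfN /= .
have -> : 'Re (1 : algC) = 1 by apply/Creal_ReP; apply: rpred1.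
rewrite lerN2 => Rge1.
have nw0 : `|w0| = 1.
  apply/eqP; move: (congr1 (fun x => `|x|) w0p) => /=.
  rewrite normrX normr1 => /eqP; rewrite -(prednK p0) pexpr_eq1 //.
have hle := leif_normC_Re_Creal w0.
have eqn : `|'Re w0| = `|w0|.
  apply/eqP; rewrite eq_le hle nw0 /=.
  by apply: le_trans Rge1 _; apply: real_ler_norm; apply: Creal_Re.
have wreal : w0 \is Num.real by case: hle => _ <-; rewrite eqn.
move/Creal_ReP: (wreal) => wRe; rewrite wRe in Rge1.
move/eqP: w0n1; apply; rewrite -nw0 ger0_norm //.
by apply: le_trans Rge1; apply: ler01.
Qed.


Lemma predlt t q : (0 < t)%N -> (t < q.+1)%N -> (t.-1 < q)%N. Proof. lia. Qed.
Lemma predinj a b : (0 < a)%N -> (0 < b)%N -> a.-1 = b.-1 -> a = b. Proof. lia. Qed.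

Lemma half_lt m q : (m * 2 = q)%N -> (2 < q.+1)%N -> (m < q)%N. Proof. lia. Qed.
Lemma half_pos m q : (m * 2 = q)%N -> (2 < q.+1)%N -> (m == 0)%N = false. Proof. lia. Qed.

Lemma sum_mul (F : nat -> algC) n m :
  \sum_(0 <= e < n * m) F e = \sum_(0 <= a < n) \sum_(0 <= k < m) F (k + a * m)%N.
Proof.
elim: n => [|n IH]; first by rewrite mul0n !big_geq.
rewrite mulSnr big_nat_recr //= -IH (big_cat_nat (n := n * m)) ?leq_addr //=.
congr (_ + _); rewrite -{1}[(n * m)%N]add0n big_addn addKn //.
Qed.

Lemma dmod i j n q : (i < n)%N -> (j < n)%N -> (0 < q)%N ->
  (((j + (q * n - i)) %% n == 0) = (i == j))%N.
Proof.
move=> ii jj; case: q => // q _.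
have -> : (j + (q.+1 * n - i) = q * n + (j + (n - i)))%N.
  rewrite mulSn; move: (q * n) => y; lia.
rewrite modnMDl; case: (leqP i j) => ij.
  have -> : (j + (n - i) = (j - i) + n)%N by lia.
  rewrite modnDr modn_small; last by lia.
  by rewrite subn_eq0 eqn_leq ij.
rewrite modn_small; last by lia.
have -> : (i == j) = false by apply/eqP; lia.
by apply/eqP; lia.
Qed.

Section Main.
Variables (n1 p r l : nat) (sigma : {rmorphism algC -> algC}) (w : algC).
Hypotheses (n1odd : odd n1) (pP : prime p) (p2 : (2 < p)%N) (n1P : (n1 %| p.-1)%N)
 (wprim : p.-primitive_root w)
 (hr1 : (r ^ p.-1 = 1 %[mod p])%N)
 (hr2 : forall k, (0 < k < p.-1)%N -> (r ^ k != 1 %[mod p])%N)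
 (hl : w ^+ (l * r) = w ^+ l * w)
 (hs : sigma w = w ^+ r).

Local Notation Pm := p.-1.
Local Notation N := (p.-1 %/ n1)%N.

Lemma p0 : (0 < p)%N. Proof. exact: prime_gt0. Qed.
Lemma PS : Pm.+1 = p. Proof. exact: prednK p0. Qed.
Lemma podd : odd p.
Proof. by case: (even_prime pP) => // h2; move: p2; rewrite h2. Qed.
Lemma Podd : odd Pm = false.
Proof. by have := podd; rewrite -PS /=; case: (odd Pm). Qed.
Lemma n1gt0 : (0 < n1)%N. Proof. by case: n1 n1odd. Qed.
Lemma PN : (N * n1 = Pm)%N. Proof. exact: divnK. Qed.
Lemma Neven : odd N = false.
Proof. have h := Podd; rewrite -PN oddM n1odd andbT in h; exact: h. Qed.
Lemma Ngt0 : (0 < N)%N.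
Proof. have := PN; case: (N) => //= h; move: p2; rewrite -PS -h. by []. Qed.

Lemma wp : w ^+ p = 1. Proof. exact: prim_expr_order. Qed.
Lemma wn1 : w != 1.
Proof.
apply/eqP => h; have := prim_order_dvd wprim 1; rewrite expr1 h eqxx.
by move/dvdn_leq => /(_ isT); rewrite leqNgt ltnW.
Qed.
Lemma wn0 : w != 0.
Proof. by apply/eqP=> h; have := wp; rewrite h expr0n; move: p0; case: (p) => //= n _ /eqP; rewrite eq_sym oner_eq0. Qed.

Lemma wexp_eq a b : (a = b %[mod p])%N -> w ^+ a = w ^+ b.
Proof. by move=> h; rewrite -(prim_expr_mod wprim a) h prim_expr_mod. Qed.

Lemma wSP : w * w ^+ Pm = 1. Proof. by rewrite -exprS PS wp. Qed.

Lemma wconj a : (w ^+ a)^* = w ^+ (a * Pm).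
Proof.
have nw : `|w| = 1.
  apply/eqP; move: (congr1 (fun x => `|x|) wp) => /=.
  by rewrite normrX normr1 => /eqP; rewrite -PS pexpr_eq1.
have h1 : w * w^* = 1 by rewrite -normCK nw expr1n.
have wc : w^* = w ^+ Pm by apply: (mulfI wn0); rewrite h1 wSP.
by rewrite rmorphXn /= wc -exprM mulnC.
Qed.

Lemma modFp a b : (a = b %[mod p])%N <-> ((a%:R : 'F_p) = b%:R).
Proof.
split=> h; first by rewrite -(Fp_nat_mod pP) h Fp_nat_mod.
by rewrite -!(val_Fp_nat pP) h.
Qed.

Lemma Fp0 n : ((n%:R : 'F_p) == 0) = (p %| n)%N.
Proof.
apply/eqP/idP => [h | h].
  by rewrite /dvdn -(val_Fp_nat pP) h.
by move/eqP: h => h; apply/val_inj; rewrite /= (val_Fp_nat pP) h.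
Qed.

Lemma Fpp : (p%:R : 'F_p) = 0. Proof. by apply/eqP; rewrite Fp0. Qed.
Lemma FpP : (Pm%:R : 'F_p) = -1.
Proof. by apply/eqP; rewrite -addr_eq0 natr1 PS Fpp. Qed.

Local Notation x := (r%:R : 'F_p).

Lemma xP : x ^+ Pm = 1. Proof. by rewrite -natrX; move/modFp: hr1. Qed.
Lemma xn0 : x != 0.
Proof. apply/eqP => h; have := xP; rewrite h expr0n; move: p2; rewrite -PS; case: (Pm) => //= n _ /eqP; rewrite eq_sym oner_eq0. Qed.

Lemma x1 k : (k < Pm)%N -> (x ^+ k == 1) = (k == 0)%N.
Proof.
move=> kP; case: k kP => [|k] kP; first by rewrite expr0 eqxx.
apply/negbTE; have := hr2 k.+1; rewrite kP => /(_ isT).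
by apply: contra => /eqP h; apply/eqP/modFp; rewrite natrX h.
Qed.

Lemma r_inj a b : (a < Pm)%N -> (b < Pm)%N -> x ^+ a = x ^+ b -> a = b.
Proof.
wlog ab : a b / (a <= b)%N.
  move=> H aP bP h; case: (leqP a b) => [ab|ba]; first exact: H.
  by apply/esym/H => //; apply: ltnW.
move=> aP bP h; have e : x ^+ (b - a) = 1.
  apply: (mulfI (expf_neq0 a xn0)); rewrite -exprD subnKC // h mulr1 //.
move: e => /eqP; rewrite x1; last by apply: leq_ltn_trans bP; apply: leq_subr.
  by rewrite subn_eq0 => ba; apply/eqP; rewrite eqn_leq ab.
Qed.

Lemma xm : x ^+ (Pm./2) = -1.
Proof.
have e2 : (Pm./2 * 2 = Pm)%N.
  by rewrite -[in RHS](odd_double_half Pm) Podd add0n -mul2n mulnC.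
have : (x ^+ (Pm./2)) ^+ 2 == 1 by rewrite -exprM e2 xP.
rewrite sqrf_eq1 => /orP [|/eqP //].
have p2' : (2 < Pm.+1)%N by rewrite PS.
rewrite x1; first by rewrite (half_pos _ _ e2 p2'). 
exact: half_lt _ _ e2 p2'.
Qed.

Lemma rm_mod : (r ^ (Pm./2) = Pm %[mod p])%N.
Proof. by apply/modFp; rewrite natrX xm FpP. Qed.

Lemma r_ndvd k : ~~ (p %| r ^ k)%N.
Proof.
rewrite -Fp0 natrX; apply: expf_neq0; exact: xn0.
Qed.

Lemma reindex_r (R : Type) (idx : R) (op : Monoid.com_law idx) (F : nat -> R) M :
  (forall a b, a = b %[mod p] -> F a = F b)%N -> ~~ (p %| M)%N ->
  \big[op/idx]_(e < Pm) F (r ^ e * M)%N = \big[op/idx]_(y < Pm) F y.+1.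
Proof.
move=> hF hM.
have pos e : (0 < (r ^ e * M) %% p)%N.
  rewrite lt0n; apply/negP => /eqP h.
  have : (p %| r ^ e * M)%N by rewrite /dvdn h.
  by rewrite Euclid_dvdM // (negPf (r_ndvd e)) (negPf hM).
have lt e : (((r ^ e * M) %% p).-1 < Pm)%N.
  by apply: predlt; [apply: pos | rewrite PS; apply: ltn_pmod p0].
pose h (e : 'I_Pm) : 'I_Pm := Ordinal (lt e).
have hinj : injective h.
  move=> a b /(congr1 val) /= e.
  have e2 : ((r ^ a * M) %% p = (r ^ b * M) %% p)%N.
    by apply: (predinj _ _ _ _ e); apply: pos.
  move/modFp: e2; rewrite !natrM !natrX => e3.
  apply/val_inj/r_inj; [exact: ltn_ord | exact: ltn_ord | ].
  by apply: (mulIf _ e3); rewrite Fp0.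
rewrite [RHS](reindex_inj hinj) /=; apply: eq_bigr => e _.
apply: hF; rewrite prednK ?pos //; by rewrite modn_mod.
Qed.

Lemma wsum : \sum_(y < p) w ^+ y = 0.
Proof.
apply: (mulfI (_ : w - 1 != 0)); first by rewrite subr_eq0 wn1.
by rewrite -subrX1 wp subrr mulr0.
Qed.

Lemma gsum M : \sum_(e < Pm) w ^+ (r ^ e * M)%N = if (p %| M)%N then Pm%:R else -1.
Proof.
case: ifP => hM.
  rewrite (eq_bigr (fun _ => 1)) ?sumr_const ?card_ord //.
  move=> e _; rewrite -(expr0 w); apply: wexp_eq.
  by rewrite mod0n; apply/eqP; apply: dvdn_mull.
rewrite (reindex_r _ _ _ (fun a : nat => w ^+ a) M); last 2 first.
  by move=> a b; apply: wexp_eq.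
  by rewrite hM.
have h := wsum; rewrite -PS big_ord_recl expr0 in h.
apply/eqP; rewrite -addr_eq0 addrC; apply/eqP; rewrite -[RHS]h; congr (_ + _).
Qed.

Lemma prod1 : \prod_(y < Pm) (1 - w ^+ y.+1) = p%:R.
Proof.
have h := factor_Xn_sub_1 wprim.
rewrite big_mkord -PS big_ord_recl expr0 polyC1 subrX1 in h.
have nz : ('X - 1 : {poly algC}) != 0 by rewrite -polyC1 polyXsubC_eq0.
move/(mulfI nz): h => /(congr1 (fun q => q.[1])).
rewrite horner_prod horner_sum => h.
transitivity (\sum_(i < Pm.+1) ('X^i : {poly algC}).[1]).
  by rewrite -h; apply: eq_bigr => i _; rewrite hornerXsubC lift0.
rewrite (eq_bigr (fun _ => 1)) ?sumr_const ?card_ord ?PS // => i _.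
by rewrite hornerXn expr1n.
Qed.

Definition alpha := \prod_(k < Pm./2) (1 - w ^+ (r ^ k)).
Definition beta := w ^+ l * alpha.
Definition u e := (-1) ^+ e * w ^+ (r ^ e).
Definition S t := \sum_(0 <= a < N) u (t + a * n1).

Lemma sigma_w a : sigma (w ^+ a) = w ^+ (a * r).
Proof. by rewrite rmorphXn /= hs -exprM mulnC. Qed.

Lemma mm : (Pm./2 + Pm./2 = Pm)%N.
Proof. by rewrite addnn -[in RHS](odd_double_half Pm) Podd add0n. Qed.

Lemma alpha_conj : alpha * alpha^* = p%:R.
Proof.
have e k : w ^+ (r ^ k * Pm) = w ^+ (r ^ (Pm./2 + k)).
  apply: wexp_eq; rewrite [in RHS]expnD -[in RHS]modnMml rm_mod modnMml.
  by rewrite (mulnC Pm).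
rewrite /alpha rmorph_prod /=.
under [X in _ * X]eq_bigr => k _ do rewrite rmorphB rmorph1 /= wconj e.
transitivity (\prod_(i < Pm./2 + Pm./2) (1 - w ^+ (r ^ i))).
  by rewrite big_split_ord.
rewrite -prod1 -(reindex_r _ _ _ (fun a => 1 - w ^+ a) 1); last 2 first.
- by move=> a b e1; rewrite (wexp_eq _ _ e1).
- by rewrite dvdn1; case: (p) p2 => // [[|]].
rewrite mm; apply: eq_bigr => i _; by rewrite muln1.
Qed.

Lemma sigma_alpha : sigma alpha = - w ^+ Pm * alpha.
Proof.
have e1 : \prod_(k < (Pm./2).+1) (1 - w ^+ (r ^ k)) = alpha * (1 - w ^+ (r ^ Pm./2)).
  by rewrite big_ord_recr.
have e2 : \prod_(k < (Pm./2).+1) (1 - w ^+ (r ^ k)) = (1 - w) * sigma alpha.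
  rewrite big_ord_recl expn0 expr1 /alpha rmorph_prod; congr (_ * _).
  by apply: eq_bigr => k _; rewrite rmorphB rmorph1 sigma_w -expnSr lift0.
have e3 : w ^+ (r ^ Pm./2) = w ^+ Pm by apply: wexp_eq; exact: rm_mod.
apply: (mulfI (_ : 1 - w != 0)); first by rewrite subr_eq0 eq_sym wn1.
rewrite -e2 e1 e3.
have -> : (1 - w) * (- w ^+ Pm * alpha) = alpha * (w * w ^+ Pm) - alpha * w ^+ Pm by ring.
by rewrite wSP; ring.
Qed.

Lemma sigma_beta : sigma beta = - beta.
Proof.
rewrite /beta rmorphM sigma_w hl sigma_alpha.
have -> : w ^+ l * w * (- w ^+ Pm * alpha) = - (w ^+ l * alpha * (w * w ^+ Pm)) by ring.
by rewrite wSP mulr1.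
Qed.

Lemma beta_conj : beta * beta^* = p%:R.
Proof.
rewrite /beta rmorphM /= wconj mulrACA alpha_conj -exprD.
have -> : (l + l * Pm = p * l)%N by rewrite -mulnS PS mulnC.
by rewrite exprM wp expr1n mul1r.
Qed.

Lemma iter_z t : iter t sigma (beta * (1 - w)) = (-1) ^+ t * beta * (1 - w ^+ (r ^ t)).
Proof.
elim: t => [|t IH] /=; first by rewrite expr0 mul1r expn0 expr1.
rewrite IH rmorphM rmorphM rmorph_sign sigma_beta rmorphB rmorph1 sigma_w -expnSr exprS.
ring.
Qed.

Lemma iter_sum t (I : Type) (s : seq I) (Pr : pred I) F :
  iter t sigma (\sum_(i <- s | Pr i) F i) = \sum_(i <- s | Pr i) iter t sigma (F i).
Proof. by elim: t => //= t IH; rewrite IH rmorph_sum. Qed.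

Lemma sum_sign n : odd n = false -> \sum_(0 <= k < n) (-1) ^+ k = 0 :> algC.
Proof.
move=> ne; rewrite -(odd_double_half n) ne add0n.
elim: (n./2) => [|h IH]; first by rewrite big_geq.
rewrite doubleS !big_nat_recr //= IH exprS -signr_odd odd_double expr0.
by rewrite add0r mulN1r subrr.
Qed.

Lemma shift1 (F : nat -> algC) n : F n = F 0%N ->
  \sum_(0 <= i < n) F i.+1 = \sum_(0 <= i < n) F i.
Proof.
move=> h; apply: (addrI (F 0%N)); rewrite -big_nat_recl // big_nat_recr //= h addrC.
by [].
Qed.

Lemma shiftc (F : nat -> algC) n c : (forall e, F (e + n)%N = F e) ->
  \sum_(0 <= e < n) F (e + c)%N = \sum_(0 <= e < n) F e.
Proof.
move=> hF; elim: c => [|c IH]; first by apply: eq_bigr => e _; rewrite addn0.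
rewrite -IH -(shift1 (fun e => F (e + c)%N)).
  by apply: eq_bigr => e _; rewrite addSnnS.
by rewrite /= add0n addnC hF.
Qed.

Lemma u_per e : u (e + Pm) = u e.
Proof.
rewrite /u exprD -[(-1) ^+ Pm]signr_odd Podd expr0 mulr1; congr (_ * _).
apply: wexp_eq; rewrite expnD -modnMmr hr1 modnMmr muln1 //.
Qed.

Lemma S_per t : S (t + n1) = S t.
Proof.
rewrite /S -(shift1 (fun a => u (t + a * n1))).
  by apply: eq_bigr => a _; rewrite mulSn addnA.
by rewrite /= PN mul0n addn0 u_per.
Qed.

Lemma S_addm t a : S (t + a * n1) = S t.
Proof. by elim: a => [|a IH]; rewrite ?mul0n ?addn0 // mulSnr addnA S_per IH. Qed.

Lemma S_mod t : S t = S (t %% n1).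
Proof. by rewrite {1}(divn_eq t n1) addnC S_addm. Qed.


Lemma sumS1 t : \sum_(1 <= k < N.+1) u (t + k * n1) = S t.
Proof.
rewrite big_add1 /= -(S_per t) /S; apply: eq_bigr => k _.
by rewrite mulSn addnA.
Qed.

Lemma sg k : (-1) ^+ (k * n1) = (-1) ^+ k :> algC.
Proof. by rewrite -signr_odd oddM n1odd andbT signr_odd. Qed.

Lemma iter_x t : iter t sigma (\sum_(1 <= k < N.+1) iter (k * n1) sigma (beta * (1 - w)))
   = - beta * S t.
Proof.
rewrite iter_sum.
transitivity (beta * \sum_(1 <= k < N.+1) (-1) ^+ (t + k * n1)
   - beta * \sum_(1 <= k < N.+1) u (t + k * n1)).
  rewrite !mulr_sumr -sumrB; apply: eq_bigr => k _; rewrite -iterD iter_z /u; ring.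
rewrite sumS1 big_add1 /=.
rewrite (eq_bigr (fun k => - ((-1) ^+ t * (-1) ^+ k))); last first.
  move=> k _; rewrite exprD sg exprS; ring.
rewrite sumrN -mulr_sumr sum_sign ?Neven // mulr0 oppr0 mulr0 sub0r mulNr //.
Qed.

Lemma uconj e c : u e * (u (e + c))^* = (-1) ^+ c * w ^+ (r ^ e * (1 + r ^ c * Pm)).
Proof.
rewrite /u rmorphM rmorph_sign /= wconj.
have -> : (r ^ e * (1 + r ^ c * Pm) = r ^ e + r ^ (e + c) * Pm)%N.
  by rewrite expnD mulnDr muln1 mulnA.
have s2 : (-1) ^+ e * (-1) ^+ e = 1 :> algC.
  by rewrite -exprD -signr_odd addnn odd_double.
rewrite !exprD.
transitivity ((-1) ^+ e * (-1) ^+ e * (-1) ^+ c * (w ^+ (r ^ e) * w ^+ (r ^ (e + c) * Pm))).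
  rewrite expnD; ring.
by rewrite s2 mul1r expnD.
Qed.

Lemma ginner c : (c < Pm)%N ->
  \sum_(0 <= e < Pm) u e * (u (e + c))^* = (-1) ^+ c * (if c == 0%N then Pm%:R else -1).
Proof.
move=> cP; under eq_bigr do rewrite uconj.
rewrite -mulr_sumr big_mkord gsum; congr (_ * _).
have -> : (p %| 1 + r ^ c * Pm)%N = (c == 0%N).
  by rewrite -Fp0 natrD natrM natrX FpP mulrN1 mulr1n subr_eq0 eq_sym x1.
by [].
Qed.

Lemma n1n0 : (n1 == 0)%N = false.
Proof. by case: n1 n1gt0. Qed.

Lemma core d : (d < n1)%N ->
  \sum_(0 <= e < Pm) u e * (S (e + d))^* = (d == 0%N)%:R * p%:R.
Proof.
move=> dn.
under eq_bigr do rewrite /S rmorph_sum mulr_sumr.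
rewrite exchange_big /=.
transitivity (\sum_(0 <= s < N) ((-1) ^+ (d + s * n1) *
   (if (d + s * n1 == 0)%N then (Pm%:R : algC) else -1))).
  apply: eq_big_nat => s /andP [_ sN]; rewrite -(ginner (d + s * n1)).
    by apply: eq_bigr => e _; rewrite addnA.
  apply: (@leq_trans (s.+1 * n1)); first by rewrite mulSn ltn_add2r.
  by rewrite -PN leq_mul2r sN orbT.
have hsg : \sum_(0 <= s < N.-1) (-1) ^+ s.+1 = -1 :> algC.
  have := sum_sign _ Neven; rewrite -{1}(prednK Ngt0) big_nat_recl // expr0.
  by move/eqP; rewrite addrC addr_eq0 => /eqP.
rewrite -{1}(prednK Ngt0) big_nat_recl // mul0n addn0.
rewrite (eq_bigr (fun s => - ((-1) ^+ d * (-1) ^+ s.+1))); last first.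
  move=> s _; have -> : (d + s.+1 * n1 == 0)%N = false.
    by rewrite addn_eq0 muln_eq0 /= n1n0 andbF.
  by rewrite exprD sg mulrN1.
rewrite sumrN -mulr_sumr hsg.
case: eqP => [->|_] /=.
  by rewrite expr0 !mul1r opprK natr1 PS.
by rewrite subrr mul0r.
Qed.


Lemma core2 i j : (i < n1)%N -> (j < n1)%N ->
  \sum_(0 <= k < n1) S (i + k) * (S (j + k))^* = (i == j)%:R * p%:R.
Proof.
move=> iN jN.
have n1Pm : (n1 <= Pm)%N by apply: dvdn_leq n1P; rewrite -PN muln_gt0 Ngt0 n1gt0.
transitivity (\sum_(0 <= e < Pm) u (i + e) * (S (j + e))^*).
  rewrite -PN sum_mul exchange_big /=; apply: eq_bigr => k _.
  rewrite [S (i + k)]/S mulr_suml; apply: eq_bigr => a _.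
  by rewrite !addnA S_addm.
rewrite -(shiftc (fun e => u (i + e) * (S (j + e))^*) Pm (Pm - i)); last first.
  move=> e /=; rewrite !addnA u_per -PN S_addm //.
set d := ((j + (Pm - i)) %% n1)%N.
transitivity (\sum_(0 <= e < Pm) u e * (S (e + d))^*).
  apply: eq_bigr => e _.
  rewrite addnCA subnKC; last by apply: leq_trans n1Pm; apply: ltnW.
  rewrite u_per S_mod [in RHS]S_mod addnCA /d modnDmr //.
rewrite core ?ltn_mod ?n1gt0 // /d -PN dmod //.
by rewrite divn_gt0 ?n1gt0 // -PN -{1}(mul1n n1) leq_pmul2r ?n1gt0 // Ngt0.
Qed.


Lemma final :
  let x := \sum_(1 <= k < N.+1) iter (k * n1) sigma (w ^+ l * alpha * (1 - w)) in
  let G : 'M[algC]_n1 :=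
    \matrix_(i < n1, j < n1) ((p%:R)^-1 * iter ((i + j) %% n1) sigma x) in
  G *m (map_mx (fun a => a^*) G)^T = 1%:M.
Proof using n1odd pP p2 n1P wprim hr1 hr2 hl hs.
move=> x G; apply/matrixP => i j; rewrite /G /x !mxE.
under eq_bigr do rewrite !mxE.
have pn0 : (p%:R : algC) != 0 by rewrite pnatr_eq0 -lt0n p0.
transitivity (\sum_(k < n1) ((p%:R)^-1 * (p%:R)^-1 * (beta * beta^*) *
    (S (i + k) * (S (j + k))^*))).
  apply: eq_bigr => k _; rewrite !iter_x -!S_mod.
  have hc : ((p%:R)^-1 : algC)^* = (p%:R)^-1 by rewrite fmorphV rmorph_nat.
  rewrite (rmorphM _ (p%:R^-1)) fmorphV rmorph_nat (rmorphM _ (- beta)) rmorphN /=; ring.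
rewrite -mulr_sumr beta_conj.
rewrite -(big_mkord xpredT (fun k => S (i + k) * (S (j + k))^*)) core2 //.
by field.
Qed.
End Main.

Lemma p_gt2 (n1 p : nat) : (3 <= n1)%N -> (1 < p)%N -> (p = 1 %[mod n1])%N -> (2 < p)%N.
Proof.
move=> h3 h1 hm; case: (ltngtP p 2) => // [h|h].
  by move: h h1; lia.
by move: hm; rewrite h !modn_small //; lia.
Qed.

Theorem mainTheorem3 (n1 p r : nat) (lambda : int)
  (sigma : {rmorphism algC -> algC})
  (hn1 : (3 <= n1)%N) (hodd : odd n1)
  (hp : prime p) (hpmod : p = 1 %[mod n1])
  (hr : primitive_root_mod p r)
  (hlam : (lambda * (r%:Z - 1) = 1 %[mod p%:Z])%Z)
  (hsigma : sigma (omega_p p) = omega_p p ^+ r) :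
  let omega := omega_p p in
  let m := p.-1./2 in
  let alpha := \prod_(k < m) (1 - omega ^+ (r ^ k)) in
  let z := omega ^ lambda * alpha * (1 - omega) in
  let x := \sum_(1 <= k < (p.-1 %/ n1).+1) iter (k * n1) sigma z in
  let G : 'M[algC]_n1 :=
    \matrix_(i < n1, j < n1) ((p%:R)^-1 * iter ((i + j) %% n1) sigma x) in
  G *m (map_mx (fun a => a^*) G)^T = 1%:M.
Proof.
move=> omega m alpha z x G.
have p2 : (2 < p)%N := p_gt2 _ _ hn1 (prime_gt1 hp) hpmod.
have n1P : (n1 %| p.-1)%N.
  by rewrite -subn1 -eqn_mod_dvd ?prime_gt0 //; apply/eqP.
have wprim : p.-primitive_root omega by apply: omega_prim.
move: hr => /andP [/eqP hr1 /forallP hr2'].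
have hr2 : forall k, (0 < k < p.-1)%N -> (r ^ k != 1 %[mod p])%N.
  by move=> k /andP [k0 kP]; move: (hr2' (Ordinal kP)); rewrite /= k0.
have wn0 : omega != 0.
  apply/eqP => h; have := prim_expr_order wprim; rewrite h expr0n.
  by move: p2; case: (p) => //= n _ /eqP; rewrite eq_sym oner_eq0.
set l := `|(lambda %% p)%Z|%N.
have pz : (p%:Z != 0) by rewrite eqz_nat -lt0n prime_gt0.
have el : (lambda %% p)%Z = l%:Z by rewrite /l gez0_abs // modz_ge0.
have homega : omega ^ lambda = omega ^+ l.
  rewrite {1}(divz_eq lambda p) expfzDr // el -exprnP mulrC -exprz_exp.
  rewrite exprz_exp (mulrC (lambda %/ p)%Z) -exprz_exp -exprnP (prim_expr_order wprim).
  by rewrite exp1rz mulr1.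
have P0 : (0 < p.-1)%N by move: p2; case: (p) => [|[|[|n]]].
have r1 : (0 < r)%N.
  rewrite lt0n; apply/eqP => r0; move: hr1; rewrite r0 exp0n // mod0n modn_small ?prime_gt1 //.
have key : (((l * r)%N %% p)%Z = ((l.+1)%N %% p)%Z).
  have -> : ((l * r)%N : int) = l%:Z * (r%:Z - 1) + l%:Z by rewrite PoszM; ring.
  rewrite -modzDml -el modzMml hlam modzDml intS addrC //.
  by rewrite el addrC.
have hl : omega ^+ (l * r) = omega ^+ l * omega.
  apply/eqP; rewrite -exprSr (eq_prim_root_expr wprim); apply/eqP.
  by move: key; rewrite !modz_nat; case.
have F := final _ _ _ _ _ _ hodd hp p2 n1P wprim hr1 hr2 hl hsigma.
rewrite /G /x /z homega; exact: F.
Qed.
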